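(* There is a constant $k>0$ such that for infinitely many primes $q$, every first-order sentence $\varphi$ of the ring language $L(+,\times,0,1)$ describing $\mathbb F_q$ satisfies $\log q\le k\,|\varphi|\log|\varphi|$.
   Context: A sentence $\phi$ describes a structure $M$ if $M$ is, up to isomorphism, the unique model of $\phi$. The length $|\phi|$ of a formula is its number of symbols, each variable counting as a single symbol. Here $\log m=\min\{r\in\mathbb N: 2^r\ge m\}$. *)

(* Defs.v *)
From HB Require Import structures.
From mathcomp Require Import all_boot all_order all_algebra.
Set Implicit Arguments. Unset Strict Implicit. Unset Printing Implicit Defensive.

Inductive term : Type :=
  | TVar : nat -> term
  | TZero : term
  | TOne : term
  | TAdd : term -> term -> term
  | TMul : term -> term -> term.

Inductive formula : Type :=
  | FEq : term -> term -> formula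
  | FNot : formula -> formula
  | FAnd : formula -> formula -> formula
  | FOr : formula -> formula -> formula
  | FImp : formula -> formula -> formula
  | FEx : nat -> formula -> formula
  | FAll : nat -> formula -> formula.

(* An L-structure: a (nonempty, since it contains zero) carrier with
   interpretations of 0, 1, +, *. No axioms are imposed. *)
Record Lstruct := LStruct {
  carrier :> Type;
  s_zero : carrier;
  s_one : carrier;
  s_add : carrier -> carrier -> carrier;
  s_mul : carrier -> carrier -> carrier }.

Fixpoint teval (M : Lstruct) (e : nat -> M) (t : term) : M :=
  match t with
  | TVar i => e i
  | TZero => @s_zero M
  | TOne => @s_one M
  | TAdd a b => @s_add M (teval e a) (teval e b)
  | TMul a b => @s_mul M (teval e a) (teval e b)
  end.

Definition upd (M : Type) (e : nat -> M) (x : nat) (v : M) : nat -> M :=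
  fun i => if i == x then v else e i.

Fixpoint sat (M : Lstruct) (e : nat -> M) (f : formula) : Prop :=
  match f with
  | FEq a b => teval e a = teval e b
  | FNot g => ~ sat e g
  | FAnd g h => sat e g /\ sat e h
  | FOr g h => sat e g \/ sat e h
  | FImp g h => sat e g -> sat e h
  | FEx x g => exists v : M, sat (upd e x v) g
  | FAll x g => forall v : M, sat (upd e x v) g
  end.

Fixpoint tvars (t : term) : seq nat :=
  match t with
  | TVar i => [:: i]
  | TZero | TOne => [::]
  | TAdd a b | TMul a b => tvars a ++ tvars b
  end.

Fixpoint fvars (f : formula) : seq nat :=
  match f with
  | FEq a b => tvars a ++ tvars b
  | FNot g => fvars g
  | FAnd g h | FOr g h | FImp g h => fvars g ++ fvars h
  | FEx x g | FAll x g => filter (fun i => i != x) (fvars g)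
  end.

Definition sentence (f : formula) : Prop := fvars f = [::].

(* M |= phi for a sentence (environment irrelevant; we use the constant
   environment at 0). *)
Definition models (M : Lstruct) (f : formula) : Prop := sat (fun _ => @s_zero M) f.

Definition Liso (M N : Lstruct) : Prop :=
  exists h : M -> N, bijective h /\
    h (@s_zero M) = @s_zero N /\ h (@s_one M) = @s_one N /\
    (forall x y, h (@s_add M x y) = @s_add N (h x) (h y)) /\
    (forall x y, h (@s_mul M x y) = @s_mul N (h x) (h y)).

Definition describes (f : formula) (M : Lstruct) : Prop :=
  models M f /\ forall N : Lstruct, models N f -> Liso N M.

(* Length: number of symbols (Polish notation); each variable is one symbol,
   a quantifier block "Ex x" counts two symbols. *)
Fixpoint tlen (t : term) : nat :=
  match t with
  | TVar _ | TZero | TOne => 1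
  | TAdd a b | TMul a b => (tlen a + tlen b).+1
  end.

Fixpoint flen (f : formula) : nat :=
  match f with
  | FEq a b => (tlen a + tlen b).+1
  | FNot g => (flen g).+1
  | FAnd g h | FOr g h | FImp g h => (flen g + flen h).+1
  | FEx _ g | FAll _ g => (flen g).+2
  end.

Definition clog (m : nat) : nat := up_log 2 m.

Definition Fq_struct (q : nat) : Lstruct :=
  @LStruct 'F_q 0%R 1%R (fun x y => (x + y)%R) (fun x y => (x * y)%R).

(* Main.v *)
Require Import Defs.
From HB Require Import structures.
From mathcomp Require Import all_boot all_order all_algebra.
From mathcomp Require Import zify ring.
From Stdlib Require Import Classical ClassicalEpsilon.
Set Implicit Arguments. Unset Strict Implicit. Unset Printing Implicit Defensive.

Lemma central_bin x : 2 ^ x <= 'C(x.*2, x).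
Proof.
elim: x => [|x IH]; first by [].
have step : 2 * 'C(x.*2, x) <= 'C((x.+1).*2, x.+1).
  rewrite doubleS; case: x {IH} => [|y]; first by [].
  rewrite !binS doubleS.
  lia.
rewrite expnS; apply: leq_trans step; by rewrite leq_mul2l IH orbT.
Qed.

Lemma sum_zero_tail p n a b : 1 < p -> n < p ^ a ->
  \sum_(a <= k < b) n %/ p ^ k = 0.
Proof.
move=> p1 hn; rewrite big_nat_cond big1 // => k /andP[/andP[ak _] _].
apply/divn_small/(leq_trans hn); by rewrite leq_pexp2l // ltnW.
Qed.

Lemma legendre_ext p n M : prime p -> n < M ->
  logn p n`! = \sum_(1 <= k < M) n %/ p ^ k.
Proof.
move=> pp nM; have p1 := prime_gt1 pp; rewrite logn_fact //.
rewrite [RHS](big_cat_nat _ (n:=n.+1)) //= (sum_zero_tail (a:=n.+1)) ?addn0 //.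
apply: (ltn_trans (ltn_expl n p1)); by rewrite ltn_exp2l.
Qed.

Lemma div_double x d : 0 < d -> x.*2 %/ d <= (x %/ d).*2.+1.
Proof.
move=> d0; rewrite -ltnS ltn_divLR //.
have := ltn_ceil x d0; rewrite -!muln2 => h.
have : x * 2 < (x %/ d).+1 * d * 2 by rewrite ltn_pmul2r.
nia.
Qed.

Lemma logn_central p x : prime p -> 0 < x ->
  p ^ logn p 'C(x.*2, x) <= x.*2.
Proof.
move=> pp x0; have p1 := prime_gt1 pp.
set t := trunc_log p x.*2.
have x2 : 0 < x.*2 by rewrite double_gt0.
suff : logn p 'C(x.*2, x) <= t.
  move=> h; apply: leq_trans (trunc_logP p1 x2).
  by rewrite leq_exp2l.
have hf := bin_fact (leq_addr x x : x <= x + x).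
rewrite addnK addnn in hf.
have hl : logn p (x.*2)`! = logn p 'C(x.*2, x) + (logn p x`! + logn p x`!).
  by rewrite -hf lognM ?bin_gt0 ?muln_gt0 ?fact_gt0 ?leq_double ?leq_addr ?lognM ?fact_gt0 // -addnn leq_addr.
have tM : t < x.*2.+1.
  rewrite ltnS; apply: leq_trans (trunc_logP p1 x2).
  exact: ltnW (ltn_expl _ p1).
rewrite (legendre_ext (M := x.*2.+1)) // in hl.
rewrite (legendre_ext (n := x) (M := x.*2.+1)) // in hl; last by rewrite ltnS -addnn leq_addr.
have split_sum : forall y, y <= x.*2 ->
    \sum_(1 <= k < x.*2.+1) y %/ p ^ k = \sum_(1 <= k < t.+1) y %/ p ^ k.
  move=> y hy; rewrite (big_cat_nat _ (n:=t.+1) (m:=1) (p:=x.*2.+1)) //=.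
  rewrite (sum_zero_tail (a:=t.+1)) ?addn0 //.
  exact: leq_ltn_trans hy (trunc_log_ltn _ p1).
rewrite !split_sum // in hl; last by rewrite -addnn leq_addr.
have hs : \sum_(1 <= k < t.+1) x.*2 %/ p ^ k <= \sum_(1 <= k < t.+1) ((x %/ p ^ k).*2 + 1).
  by apply: leq_sum => k _; rewrite addn1; apply: div_double; rewrite expn_gt0 prime_gt0.
rewrite big_split /= sum_nat_const_nat subn1 /= muln1 in hs.
have hd : \sum_(1 <= k < t.+1) (x %/ p ^ k).*2 = (\sum_(1 <= k < t.+1) (x %/ p ^ k)).*2.
  by rewrite -muln2 big_distrl /=; apply: eq_bigr => k _; rewrite muln2.
rewrite hd in hs. lia.
Qed.

Definition primepi X := count prime (iota 0 X.+1).

Lemma prod_le_exp (s : seq nat) (F : nat -> nat) c :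
  (forall p, p \in s -> F p <= c) -> \prod_(p <- s) F p <= c ^ size s.
Proof.
elim: s => [|a s IH] h; first by rewrite big_nil.
rewrite big_cons /= expnS leq_mul //.
  by apply: h; rewrite inE eqxx.
by apply: IH => p ps; apply: h; rewrite inE ps orbT.
Qed.

Lemma chebyshev x : 0 < x -> 2 ^ x <= (x.*2) ^ primepi (x.*2).
Proof.
move=> x0; apply: leq_trans (central_bin x) _.
set C := 'C(x.*2, x).
have C0 : 0 < C by rewrite bin_gt0 -addnn leq_addr.
have hmem : forall p, p \in primes C -> prime p /\ p <= x.*2.
  move=> p; rewrite mem_primes => /and3P[pp _ pd]; split=> //.
  have hl : 0 < logn p C by rewrite logn_gt0 mem_primes pp C0 pd.
  apply: leq_trans (logn_central pp x0).
  by rewrite -{1}(expn1 p) leq_exp2l // prime_gt1.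
rewrite {1}(prod_prime_decomp C0) prime_decompE big_map /=.
apply: leq_trans (prod_le_exp (c := x.*2) _) _.
  by move=> p /hmem [pp _]; apply: logn_central.
rewrite leq_pexp2l ?double_gt0 //.
rewrite /primepi -size_filter; apply: uniq_leq_size; first exact: primes_uniq.
move=> p /hmem [pp hp]; by rewrite mem_filter pp mem_iota /= add0n ltnS.
Qed.

Fixpoint trename (s : nat -> nat) (t : term) : term :=
  match t with
  | TVar i => TVar (s i)
  | TZero => TZero
  | TOne => TOne
  | TAdd a b => TAdd (trename s a) (trename s b)
  | TMul a b => TMul (trename s a) (trename s b)
  end.

Fixpoint frename (s : nat -> nat) (f : formula) : formula :=
  match f with
  | FEq a b => FEq (trename s a) (trename s b)
  | FNot g => FNot (frename s g)
  | FAnd g h => FAnd (frename s g) (frename s h)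
  | FOr g h => FOr (frename s g) (frename s h)
  | FImp g h => FImp (frename s g) (frename s h)
  | FEx x g => FEx (s x) (frename s g)
  | FAll x g => FAll (s x) (frename s g)
  end.

Fixpoint fav (f : formula) : seq nat :=
  match f with
  | FEq a b => tvars a ++ tvars b
  | FNot g => fav g
  | FAnd g h | FOr g h | FImp g h => fav g ++ fav h
  | FEx x g | FAll x g => x :: fav g
  end.

Lemma teval_rename (M : Lstruct) (e : nat -> M) s t :
  teval e (trename s t) = teval (fun i => e (s i)) t.
Proof. by elim: t => //= [a -> b ->|a -> b ->]. Qed.

Lemma teval_ext (M : Lstruct) (e e' : nat -> M) t :
  (forall i, e i = e' i) -> teval e t = teval e' t.
Proof. by move=> h; elim: t => //= [a -> b ->|a -> b ->]. Qed.

Lemma sat_ext (M : Lstruct) f : forall (e e' : nat -> M),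
  (forall i, e i = e' i) -> (sat e f <-> sat e' f).
Proof.
elim: f => /=.
- by move=> a b e e' h; rewrite (teval_ext a h) (teval_ext b h).
- by move=> g IH e e' h; rewrite (IH e e' h).
- by move=> g IHg k IHk e e' h; rewrite (IHg e e' h) (IHk e e' h).
- by move=> g IHg k IHk e e' h; rewrite (IHg e e' h) (IHk e e' h).
- by move=> g IHg k IHk e e' h; rewrite (IHg e e' h) (IHk e e' h).
- move=> x g IH e e' h.
  have hu : forall v i, upd e x v i = upd e' x v i.
    by move=> v i; rewrite /upd; case: (i == x).
  by split=> -[v hv]; exists v; [apply/(IH _ _ (hu v)) | apply/(IH _ _ (hu v))].
- move=> x g IH e e' h.
  have hu : forall v i, upd e x v i = upd e' x v i.
    by move=> v i; rewrite /upd; case: (i == x).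
  by split=> hv v; [apply/(IH _ _ (hu v)) | apply/(IH _ _ (hu v))].
Qed.

Lemma sat_rename (M : Lstruct) s f : injective s -> forall (e : nat -> M),
  sat e (frename s f) <-> sat (fun i => e (s i)) f.
Proof.
move=> si; elim: f => /=.
- by move=> a b e; rewrite !teval_rename.
- by move=> g IH e; rewrite IH.
- by move=> g IHg k IHk e; rewrite IHg IHk.
- by move=> g IHg k IHk e; rewrite IHg IHk.
- by move=> g IHg k IHk e; rewrite IHg IHk.
- move=> x g IH e.
  have hu : forall v i, upd e (s x) v (s i) = upd (fun i => e (s i)) x v i.
    by move=> v i; rewrite /upd (inj_eq si).
  split=> -[v hv]; exists v.
    by apply/(sat_ext _ (fun i => esym (hu v i))); apply/IH.
  by apply/IH; apply/(sat_ext _ (hu v)).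
- move=> x g IH e.
  have hu : forall v i, upd e (s x) v (s i) = upd (fun i => e (s i)) x v i.
    by move=> v i; rewrite /upd (inj_eq si).
  split=> hv v.
    by apply/(sat_ext _ (fun i => esym (hu v i))); apply/IH.
  by apply/IH; apply/(sat_ext _ (hu v)).
Qed.

Lemma flen_rename s f : flen (frename s f) = flen f.
Proof.
have ht : forall t, tlen (trename s t) = tlen t.
  by elim=> //= [a -> b ->|a -> b ->].
by elim: f => //= [a b|g ->|g -> h ->|g -> h ->|g -> h ->|x g ->|x g ->]; rewrite ?ht.
Qed.

Lemma fav_rename s f : fav (frename s f) = map s (fav f).
Proof.
have ht : forall t, tvars (trename s t) = map s (tvars t).
  by elim=> //= [a -> b ->|a -> b ->]; rewrite map_cat.
by elim: f => [a b|g IH|g IH h IH'|g IH h IH'|g IH h IH'|x g IH|x g IH] /=; rewrite ?ht ?map_cat ?IH ?IH'.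
Qed.

Lemma size_fav f : size (fav f) <= flen f.
Proof.
have ht : forall t, size (tvars t) <= tlen t.
  elim=> //= [a ha b hb|a ha b hb]; rewrite size_cat; lia.
elim: f => [a b|g hg|g hg h hh|g hg h hh|g hg h hh|x g hg|x g hg] /=;
  rewrite ?size_cat; try lia.
by have := ht a; have := ht b; lia.
Qed.

Lemma normalize phi : exists phi',
  flen phi' = flen phi /\ (forall M, models M phi' <-> models M phi) /\
  all (fun i => i < flen phi) (fav phi').
Proof.
set vs := undup (fav phi); set n := flen phi.
pose s i := if i \in vs then index i vs else n + i.
have hvs : size vs <= n by apply: leq_trans (size_undup _) (size_fav _).
have si : injective s.
  move=> i j; rewrite /s.
  case: ifP => hi; case: ifP => hj.
  - exact: index_inj.
  - move=> e; have := index_mem i vs; rewrite hi e; lia.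
  - move=> e; have := index_mem j vs; rewrite hj -e; lia.
  - by move/addnI.
exists (frename s phi); split; first exact: flen_rename.
split; first by move=> M; rewrite /models sat_rename.
rewrite fav_rename all_map; apply/allP => i hi /=.
have hi' : i \in vs by rewrite mem_undup.
rewrite /s hi'; apply: leq_trans hvs; by rewrite index_mem.
Qed.

Fixpoint tenc (t : term) : seq nat :=
  match t with
  | TVar i => [:: 12 + i]
  | TZero => [:: 0]
  | TOne => [:: 1]
  | TAdd a b => 2 :: tenc a ++ tenc b
  | TMul a b => 3 :: tenc a ++ tenc b
  end.

Fixpoint fenc (f : formula) : seq nat :=
  match f with
  | FEq a b => 4 :: tenc a ++ tenc b
  | FNot g => 5 :: fenc g
  | FAnd g h => 6 :: fenc g ++ fenc h
  | FOr g h => 7 :: fenc g ++ fenc h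
  | FImp g h => 8 :: fenc g ++ fenc h
  | FEx x g => 9 :: (12 + x) :: fenc g
  | FAll x g => 10 :: (12 + x) :: fenc g
  end.

Lemma tenc_inj t : forall t' s s', tenc t ++ s = tenc t' ++ s' -> t = t' /\ s = s'.
Proof.
elim: t => [i|||a IHa b IHb|a IHa b IHb] [j|||a' b'|a' b'] s s' //= [];
  try by [].
- by move=> /eqP; rewrite eqn_add2l => /eqP -> ->.
- by rewrite -!catA => /IHa [-> /IHb [-> ->]].
- by rewrite -!catA => /IHa [-> /IHb [-> ->]].
Qed.

Lemma fenc_inj f : forall f' s s', fenc f ++ s = fenc f' ++ s' -> f = f' /\ s = s'.
Proof.
elim: f => [a b|g IH|g IH h IH'|g IH h IH'|g IH h IH'|x g IH|x g IH]
  [a' b'|g'|g' h'|g' h'|g' h'|x' g'|x' g'] s s' //= [];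
  try (rewrite -!catA => /tenc_inj [-> /tenc_inj [-> ->]] //);
  try (rewrite -!catA => /IH [-> /IH' [-> ->]] //);
  try (move=> /IH [-> ->] //);
  try (by rewrite !add0n => -> /IH [-> ->]).
Qed.

Lemma size_fenc f : size (fenc f) = flen f.
Proof.
have ht : forall t, size (tenc t) = tlen t.
  by elim=> //= [a ha b hb|a ha b hb]; rewrite size_cat ha hb.
by elim: f => [a b|g hg|g hg h hh|g hg h hh|g hg h hh|x g hg|x g hg] /=;
  rewrite ?size_cat ?ht ?hg ?hh.
Qed.

Lemma fenc_bound B f : all (fun i => i < B) (fav f) ->
  all (fun a => a < 12 + B) (fenc f).
Proof.
have ht : forall t, all (fun i => i < B) (tvars t) -> all (fun a => a < 12 + B) (tenc t).
  elim=> [i|||a ha b hb|a ha b hb] /=; rewrite ?all_cat ?andbT; try lia;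
  by move=> /andP[/ha -> /hb ->].
elim: f => [a b|g hg|g hg h hh|g hg h hh|g hg h hh|x g hg|x g hg] /=;
  rewrite ?all_cat.
- by move=> /andP[/ht -> /ht ->].
- exact: hg.
- by move=> /andP[/hg -> /hh ->].
- by move=> /andP[/hg -> /hh ->].
- by move=> /andP[/hg -> /hh ->].
- by move=> /andP[hx /hg ->]; rewrite andbT; lia.
- by move=> /andP[hx /hg ->]; rewrite andbT; lia.
Qed.

Lemma sq_lt_exp w : 5 <= w -> w * w < 2 ^ w.
Proof.
elim: w => // w IH; rewrite leq_eqVlt => /orP[/eqP <- //|h].
have := IH h; rewrite expnS; nia.
Qed.

Lemma final_arith N j : j = N + 10 ->
  (2 * 2 ^ j * j + 1) * ((12 + 2 ^ j).+1 ^ (2 ^ j) + N + 1) < 2 ^ (2 * 2 ^ j * j).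
Proof.
move=> ej; set L := 2 ^ j.
have jL : j < L by apply: ltn_expl.
have L13 : 13 <= L.
  apply: leq_trans (_ : 2 ^ 10 <= L) => //; rewrite /L leq_exp2l //; lia.
have h1 : (12 + L).+1 ^ L <= 2 ^ ((j + 1) * L).
  rewrite expnM expnD expn1 -/L leq_exp2r ?expn_gt0 //; lia.
set w := (j - 1) * L.
have j1 : j = (j - 1) + 1 by lia.
have h2 : 2 ^ (2 * L * j) = 2 ^ w * 2 ^ ((j + 1) * L).
  rewrite -expnD; congr (2 ^ _); rewrite /w {1 3}j1 -addnA.
  rewrite mulnDl mulnDr; ring.
have h3 : 2 * L * j + 1 <= 4 * w.
  rewrite /w {1}j1 mulnDr muln1.
  have : 9 <= j - 1 by lia.
  move: (j - 1) => k hk; nia.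
have h4 : 4 * (N + 2) <= w.
  rewrite /w; have : N + 9 = j - 1 by lia.
  move=> <-; apply: leq_trans (leq_mul (leqnn (N + 9)) (_ : 13 <= L)) => //; lia.
have h5 : w * w < 2 ^ w.
  apply: sq_lt_exp; apply: leq_trans h4; lia.
have h6 : 0 < 2 ^ ((j + 1) * L) by rewrite expn_gt0.
rewrite h2.
move: h1 h6 h5 h3 h4; set A := 2 ^ ((j + 1) * L); set B := 2 ^ w.
set X := (12 + L).+1 ^ L; move: (2 * L * j) => C.
move=> h1 h6 h5 h3 h4.
have s1 : (C + 1) * (X + N + 1) <= (4 * w) * ((N + 2) * A).
  apply: leq_mul => //; nia.
apply: leq_ltn_trans s1 _.
have s2 : 4 * w * ((N + 2) * A) = (4 * (N + 2) * w) * A by ring.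
rewrite s2 ltn_pmul2r //; apply: leq_ltn_trans h5.
by rewrite leq_mul2r h4 orbT.
Qed.

Import Order.TTheory GRing.Theory Num.Theory.

Lemma pad_inj (L d : nat) (s1 s2 : seq nat) :
  size s1 <= L -> size s2 <= L -> all (fun a => a < d) s1 -> all (fun a => a < d) s2 ->
  (forall i, i < L -> nth d s1 i = nth d s2 i) -> s1 = s2.
Proof.
move=> z1 z2 a1 a2 h.
have hs : size s1 = size s2.
  have gen : forall t1 t2, size t2 <= L -> all (fun a => a < d) t2 ->
      (forall i, i < L -> nth d t1 i = nth d t2 i) -> size t2 <= size t1.
    move=> t1 t2 y2 b2 hh; rewrite leqNgt; apply/negP => lt.
    have := hh (size t1) (leq_trans lt y2).
    rewrite nth_default // => e.
    have := allP b2 (nth d t2 (size t1)) (mem_nth d lt); rewrite -e ltnn //.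
  apply/eqP; rewrite eqn_leq; apply/andP; split.
    apply: gen => // i hi; by rewrite h.
  exact: gen.
apply: (eq_from_nth (x0 := d) hs) => i hi; apply: h; exact: leq_trans hi z1.
Qed.

Lemma count_split (a b : pred nat) s :
  count a s <= count (fun x => a x && b x) s + count (predC b) s.
Proof. elim: s => //= x s IH; case: (a x); case: (b x) => /=; lia. Qed.

Lemma count_le_small N M : count (predC (fun q => N < q)) (iota 0 M) <= N.+1.
Proof.
rewrite -size_filter.
apply: (@leq_trans (size (iota 0 N.+1))); last by rewrite size_iota.
apply: uniq_leq_size; first by rewrite filter_uniq // iota_uniq.
move=> q; rewrite mem_filter !mem_iota => /andP[hq _]; rewrite /= in hq; lia.
Qed.

Lemma Fq_card_eq q1 q2 : prime q1 -> prime q2 ->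
  Liso (Fq_struct q1) (Fq_struct q2) -> q1 = q2.
Proof.
move=> p1 p2 [h [hb _]].
have := bij_eq_card (T := 'F_q1) (T' := 'F_q2) hb.
by rewrite !card_Fp.
Qed.

Lemma rat_conv (a b : nat) : ~ ((a%:R : rat) <= 2%:R * (b%:R : rat))%R -> 2 * b < a.
Proof. by rewrite -natrM ler_nat ltnNge => /negP. Qed.

Lemma nth_le_d (d : nat) s i : all (fun a => a < d) s -> nth d s i <= d.
Proof.
move=> hs; case: (ltnP i (size s)) => hi.
  by apply: ltnW; exact: (allP hs _ (mem_nth d hi)).
by rewrite nth_default.
Qed.

Definition Pq (q : nat) (phi : formula) : Prop :=
  describes phi (Fq_struct q) /\ 2 * (flen phi * clog (flen phi)) < clog q /\
  all (fun i => i < flen phi) (fav phi).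

Theorem proposition4p3 :
  exists k : rat, (0 < k)%R /\
    forall N : nat, exists q : nat, N < q /\ prime q /\
      forall phi : formula, sentence phi -> describes phi (Fq_struct q) ->
        ((clog q)%:R <= k * ((flen phi * clog (flen phi))%:R : rat))%R.
Proof.
exists (2%:R)%R; split; first by [].
move=> N; apply: NNPP => H.
have Hq : forall q, N < q -> prime q -> exists phi, Pq q phi.
  move=> q hN hp; apply: NNPP => H2; apply: H; exists q; split=> //; split=> //.
  move=> phi _ hd; apply: NNPP => /rat_conv hle; apply: H2.
  have [phi' [e1 [e2 e3]]] := normalize phi.
  exists phi'; split; last by rewrite e1.
  split; first by apply/e2; case: hd.
  by move=> M /e2 hM; case: hd => _; apply.
pose j := N + 10; pose L := 2 ^ j; pose m := 2 * L * j + 1.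
pose P := filter (fun q => prime q && (N < q)) (iota 0 (2 ^ m).+1).
pose pick q := epsilon (inhabits (FEq TZero TZero)) (Pq q).
have hpick : forall q, q \in P -> Pq q (pick q).
  move=> q; rewrite mem_filter => /andP[/andP[hp hN] _].
  exact: epsilon_spec (Hq q hN hp).
have hj : 0 < j by rewrite /j addnS.
have hlen : forall q, q \in P -> flen (pick q) <= L.
  move=> q hq; have [_ [hlt _]] := hpick q hq.
  have hm : clog q <= m.
    apply: up_log_min => //; move: hq; rewrite mem_filter mem_iota => /andP[_ /andP[_ h]].
    by move: h; rewrite add0n ltnS.
  rewrite leqNgt; apply/negP => hL.
  have hc : j <= clog (flen (pick q)).
    rewrite /clog -[X in X <= _](up_expnK j (isT : 1 < 2)) -/L.
    apply: leq_up_log; exact: ltnW.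
  have : L.+1 * j <= flen (pick q) * clog (flen (pick q)) by apply: leq_mul.
  rewrite /m in hm; nia.
pose code q : {ffun 'I_L -> 'I_(12 + L).+1} :=
  [ffun i : 'I_L => inord (nth (12 + L) (fenc (pick q)) i)].
have hbound : forall q, q \in P -> all (fun a => a < 12 + L) (fenc (pick q)).
  move=> q hq; have [_ [_ hv]] := hpick q hq.
  apply: sub_all (fenc_bound hv) => a /= ha; apply: leq_trans ha _.
  by rewrite leq_add2l hlen.
have inj : {in P &, injective code}.
  move=> q1 q2 h1 h2 e.
  have hs : fenc (pick q1) = fenc (pick q2).
    apply: (pad_inj (L := L) (d := 12 + L)); rewrite ?size_fenc ?hlen ?hbound //.
    move=> i hi; move/ffunP: e => /(_ (Ordinal hi)); rewrite /code !ffunE.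
    move/(congr1 val); rewrite /= !inordK //; rewrite ltnS; exact: nth_le_d (hbound _ _).
  have hs' : fenc (pick q1) ++ [::] = fenc (pick q2) ++ [::] by rewrite !cats0.
  have [ep _] := fenc_inj hs'.
  have [[d1 _] _] := hpick q1 h1; have [[_ d2] _] := hpick q2 h2.
  move: h1 h2; rewrite !mem_filter => /andP[/andP[p1 _] _] /andP[/andP[p2 _] _].
  apply: Fq_card_eq p1 p2 _; apply: d2; by rewrite -ep.
have hP : size P <= (12 + L).+1 ^ L.
  have U : uniq (map code P) by rewrite (map_inj_in_uniq inj) filter_uniq // iota_uniq.
  rewrite -(size_map code) -(card_uniqP U).
  apply: leq_trans (max_card _) _; by rewrite card_ffun !card_ord.
have hpi : primepi (2 ^ m) <= size P + N.+1.
  rewrite /primepi /P size_filter.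
  apply: leq_trans (count_split prime (fun q => N < q) _) _.
  by rewrite leq_add2l count_le_small.
have x0 : 0 < 2 ^ (2 * L * j) by rewrite expn_gt0.
have hch := chebyshev x0.
have e2 : (2 ^ (2 * L * j)).*2 = 2 ^ m by rewrite /m addn1 expnS -mul2n.
rewrite e2 -expnM leq_exp2l // in hch.
have := final_arith (erefl j); rewrite -/L => hf.
have : 2 ^ (2 * L * j) <= (2 * L * j + 1) * ((12 + L).+1 ^ L + N + 1).
  apply: leq_trans hch _; rewrite /m leq_mul2l; apply/orP; right.
  apply: leq_trans hpi _; move: hP; lia.
by rewrite leqNgt hf.
Qed.
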